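(* Every strong locally super-compact $L$-topological space is locally super-compact.
   Context: $L$ is a frame with implication $\to$. $L$-subsets of $X$: maps $X\to L$; nonempty: $\bigvee_xA(x)=1$; ${\rm sub}_X(A,B)=\bigwedge_xA(x)\to B(x)$. $L$-topology: $\mathcal O(X)\subseteq L^X$ closed under finite meets and arbitrary joins containing all constants $a_X$; interior $A^\circ=\bigvee\{B\in\mathcal O(X):B\le A\}$. A base is $\mathcal B\subseteq\mathcal O(X)$ with $A=\bigvee_{B\in\mathcal B}{\rm sub}_X(B,A)\wedge B$ for every open $A$. Super-compact: nonempty $A\in L^X$ with ${\rm sub}_X(A,\bigvee_iV_i)=\bigvee_i{\rm sub}_X(A,V_i)$ for every family of open $V_i$; ${\rm SC}(X)$ their set. Locally super-compact: every open $A=\bigvee_{B\in{\rm SC}(X)}{\rm sub}_X(B,A)\wedge B^\circ$. Strong locally super-compact: $X$ has a base consisting of super-compact open sets. *)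

(* Defs.v *)
Set Implicit Arguments.
Unset Strict Implicit.

(* A frame with implication = a complete lattice (arbitrary joins [sup] of
   subsets, given as predicates) with binary meets and a Heyting implication
   right adjoint to meet (which makes finite meets distribute over joins). *)
Record frame := Frame {
  carrier :> Type;
  le : carrier -> carrier -> Prop;
  le_refl : forall a, le a a;
  le_trans : forall a b c, le a b -> le b c -> le a c;
  le_antisym : forall a b, le a b -> le b a -> a = b;
  sup : (carrier -> Prop) -> carrier;
  sup_ub : forall (P : carrier -> Prop) a, P a -> le a (sup P);
  sup_least : forall (P : carrier -> Prop) b,
      (forall a, P a -> le a b) -> le (sup P) b;
  meet : carrier -> carrier -> carrier;
  meet_lb1 : forall a b, le (meet a b) a;
  meet_lb2 : forall a b, le (meet a b) b;
  meet_glb : forall a b c, le c a -> le c b -> le c (meet a b);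
  imp : carrier -> carrier -> carrier;
  imp_adj : forall a b c, le c (imp a b) <-> le (meet c a) b
}.

Section FrameDefs.
Variable L : frame.

Definition ftop : L := @sup L (fun _ : L => True).
Definition inf (P : L -> Prop) : L := @sup L (fun a => forall b, P b -> le a b).
Definition fjoin (I : Type) (f : I -> L) : L := @sup L (fun a => exists i, a = f i).
Definition fmeet (I : Type) (f : I -> L) : L := inf (fun a => exists i, a = f i).

Variable X : Type.

Definition nonemptyL (A : X -> L) : Prop := fjoin A = ftop.
Definition subX (A B : X -> L) : L := fmeet (fun x => imp (A x) (B x)).
Definition leX (A B : X -> L) : Prop := forall x, le (A x) (B x).

Definition is_Ltopology (O : (X -> L) -> Prop) : Prop :=
  (forall A B, O A -> O B -> O (fun x => meet (A x) (B x))) /\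
  (forall S : (X -> L) -> Prop, (forall B, S B -> O B) ->
      O (fun x => sup (fun a => exists B, S B /\ a = B x))) /\
  (forall a : L, O (fun _ => a)).

Variable O : (X -> L) -> Prop.

Definition interior (A : X -> L) : X -> L :=
  fun x => sup (fun a => exists B, O B /\ leX B A /\ a = B x).

Definition is_base (Bs : (X -> L) -> Prop) : Prop :=
  (forall B, Bs B -> O B) /\
  forall A, O A ->
    A = fun x => sup (fun a => exists B, Bs B /\ a = meet (subX B A) (B x)).

Definition super_compact (A : X -> L) : Prop :=
  nonemptyL A /\
  forall (I : Type) (V : I -> X -> L), (forall i, O (V i)) ->
    subX A (fun x => fjoin (fun i => V i x)) = fjoin (fun i => subX A (V i)).

Definition locally_super_compact : Prop :=
  forall A, O A ->
    A = fun x => sup (fun a => exists B, super_compact B /\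
                                          a = meet (subX B A) (interior B x)).

Definition strong_locally_super_compact : Prop :=
  exists Bs, is_base Bs /\ forall B, Bs B -> super_compact B /\ O B.

End FrameDefs.

(* Main.v *)
Require Import Defs.
From Stdlib Require Import FunctionalExtensionality.

Section H.
Variable L : frame.

Lemma meet_comm_le (a b : L) : le (meet a b) (meet b a).
Proof. apply meet_glb; [apply meet_lb2|apply meet_lb1]. Qed.

Lemma inf_lb (P : L -> Prop) b : P b -> le (inf P) b.
Proof. intro Hb. unfold inf. apply sup_least. intros a Ha. now apply Ha. Qed.

Lemma mp_le (a b : L) : le (meet (imp a b) a) b.
Proof. apply imp_adj. apply le_refl. Qed.
End H.

Theorem proposition5p5 (L : frame) (X : Type) (O : (X -> L) -> Prop)
  (HO : is_Ltopology O) :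
  strong_locally_super_compact O -> locally_super_compact O.
Proof.
  intros [Bs [[HBO Hbase] HBs]] A HA.
  pose proof (Hbase A HA) as EA.
  apply functional_extensionality. intro x.
  apply le_antisym.
  - assert (EAx := f_equal (fun f => f x) EA). simpl in EAx. rewrite EAx. apply sup_least. intros a [B [HB ->]].
    eapply le_trans; [|apply sup_ub; exists B; split; [apply (HBs B HB)| reflexivity]].
    apply meet_glb; [apply meet_lb1|].
    eapply le_trans; [apply meet_lb2|].
    unfold interior. apply sup_ub. exists B. split; [apply HBO; exact HB|].
    split; [intro y; apply le_refl|reflexivity].
  - apply sup_least. intros a [B [_ ->]].
    eapply le_trans; [apply meet_comm_le|].
    apply imp_adj. unfold interior. apply sup_least.
    intros c [C [_ [HCB ->]]].
    apply imp_adj.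
    eapply le_trans; [|apply (@mp_le L (B x) (A x))].
    apply meet_glb.
    + eapply le_trans; [apply meet_lb2|]. unfold subX, fmeet. apply inf_lb. exists x. reflexivity.
    + eapply le_trans; [apply meet_lb1|]. apply HCB.
Qed.
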